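(* Let $n$ be a positive integer and $k$ an integer with $0\le k\le n$. Then $$e_k\left(\left\{\sin^2\left(\tfrac{(2j-1)\pi}{4n+2}\right) : j=1,\dots,n\right\}\right) = \frac{4^{-k}(2n-k)!}{(2n-2k)!\,k!}.$$
   Context: $e_k(\alpha_1,\dots,\alpha_n)$ denotes the degree-$k$ elementary symmetric function of $\alpha_1,\dots,\alpha_n$ (with $e_0=1$). *)

(* Defs.v *)
From Stdlib Require Import Reals List Arith.
Open Scope R_scope.

Fixpoint esym (k : nat) (l : list R) : R :=
  match k with
  | O => 1
  | S k' => match l with
            | nil => 0
            | x :: l' => esym (S k') l' + x * esym k' l'
            end
  end.

Definition sin2_list (n : nat) : list R :=
  map (fun j : nat => (sin ((2 * INR j - 1) * PI / (4 * INR n + 2))) ^ 2)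
      (seq 1 n).

(* Main.v *)
Require Import Defs.
From Stdlib Require Import Reals List Arith Lra Lia.
From mathcomp Require all_boot all_order all_algebra.
From mathcomp Require Rstruct.
From mathcomp Require zify.
From mathcomp Require ring lra.

Module Aux.
Import all_boot all_order all_algebra.
Import Rstruct.
Import zify.
Import Order.TTheory GRing.Theory Num.Theory.
Open Scope R_scope.

Definition th (n j : nat) : R := (2 * INR j - 1) * PI / (4 * INR n + 2).

Lemma th_bounds n j : (1 <= j)%N -> (j <= n)%N -> 0 < th n j /\ th n j < PI / 2.
Proof.
move=> h1 h2.
have H1 : (1 <= INR j) by apply: (le_INR 1); lia.
have H2 : (INR j <= INR n) by apply: le_INR; lia.
have HP := PI_RGT_0.
have Hd : (0 < 4 * INR n + 2) by lra.
rewrite /th; split.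
  apply: Rdiv_lt_0_compat => //; apply: Rmult_lt_0_compat; lra.
apply: (Rmult_lt_reg_r (4 * INR n + 2)) => //.
have -> : (2 * INR j - 1) * PI / (4 * INR n + 2) * (4 * INR n + 2) = (2 * INR j - 1) * PI.
  field; lra.
nra.
Qed.

Lemma th_mono n j1 j2 : (j1 < j2)%N -> th n j1 < th n j2.
Proof.
move=> h.
have H : (INR j1 < INR j2) by apply: lt_INR; lia.
have HP := PI_RGT_0.
have Hd : (0 < 4 * INR n + 2) by have := pos_INR n; lra.
rewrite /th /Rdiv; apply: Rmult_lt_compat_r; first by apply: Rinv_0_lt_compat.
nra.
Qed.

Lemma th_sin_pos n j : (1 <= j)%N -> (j <= n)%N -> 0 < sin (th n j).
Proof.
move=> h1 h2; have [a b] := th_bounds _ _ h1 h2.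
apply: sin_gt_0 => //. have := PI_RGT_0; lra.
Qed.

Lemma th_sin_mono n j1 j2 : (1 <= j1)%N -> (j1 < j2)%N -> (j2 <= n)%N ->
  sin (th n j1) ^ 2 < sin (th n j2) ^ 2.
Proof.
move=> h1 h12 h2.
have h1' : (1 <= j2)%N by lia.
have h2' : (j1 <= n)%N by lia.
have [a1 b1] := th_bounds _ _ h1 h2'.
have [a2 b2] := th_bounds _ _ h1' h2.
have p1 := th_sin_pos _ _ h1 h2'.
have HP := PI_RGT_0.
have s : sin (th n j1) < sin (th n j2).
  apply: sin_increasing_1; try lra. exact: th_mono.
simpl; nra.
Qed.

Lemma th_root n j : (1 <= j)%N -> (j <= n)%N ->
  sin (INR (2 * n).+1 * (PI / 2 - th n j)) = 0 /\
  0 < sin (PI / 2 - th n j) /\ cos (PI / 2 - th n j) = sin (th n j).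
Proof.
move=> h1 h2; have [a b] := th_bounds _ _ h1 h2.
have HP := PI_RGT_0.
split; last split.
- apply: sin_eq_0_1; exists (Z.of_nat (n.+1 - j)).
  rewrite -INR_IZR_INZ minus_INR; last by lia.
  rewrite /th S_INR mult_INR !S_INR /=.
  field. have := pos_INR n; lra.
- apply: sin_gt_0; lra.
- exact: cos_shift.
Qed.

Lemma th_root' n j : (1 <= j)%N -> (j <= n)%N ->
  exists phi, sin (INR (2 * n).+1 * phi) = 0 /\ 0 < sin phi /\ cos phi = sin (th n j).
Proof. move=> h1 h2; exists (PI / 2 - th n j); exact: th_root. Qed.

Lemma listE (B : Type) (f : nat -> B) a n : List.map f (List.seq a n) = map f (iota a n).
Proof. by elim: n a => //= n IH a; rewrite IH. Qed.

Lemma factE' m : fact m = m`!.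
Proof. elim: m => // m IH; by rewrite factS -IH mulnE. Qed.

Import ring lra.

Section Helpers.
Local Open Scope ring_scope.
Local Bind Scope ring_scope with R.

Lemma esym_big (l : seq R) k : (size l < k)%N -> Defs.esym k l = 0.
Proof.
elim: l k => [|x l IH] [|k] //= H.
rewrite (IH k.+1); last by apply: ltnW.
rewrite (IH k) //. by rewrite Rmult_0_r Rplus_0_r.
Qed.

Lemma esym_coef (l : seq R) k : (k <= size l)%N ->
  (\prod_(x <- l) ('X - x%:P))`_(size l - k) = (-1) ^+ k * Defs.esym k l.
Proof.
elim: l k => [|x l IH] k /=.
  by rewrite leqn0 => /eqP ->; rewrite big_nil coefC /= mulr1.
move=> Hk; rewrite big_cons mulrBl coefB coefXM coefCM.
case: k Hk => [|k] Hk.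
  rewrite subn0 /=.
  have h1 := IH 0%N (leq0n _); rewrite subn0 in h1.
  have h2 : (\prod_(j <- l) ('X - j%:P))`_(size l).+1 = 0.
    by apply: nth_default; rewrite size_prod_XsubC.
  by rewrite h1 h2 mulr0 subr0 !expr0 !mul1r; case: (l).
have -> : ((size l).+1 - k.+1)%N = (size l - k)%N by [].
case: (ltngtP k (size l)) => Hkl.
- have -> : (size l - k)%N = (size l - k.+1).+1 by rewrite subnSK.
  rewrite /= (IH k.+1) // subnSK // (IH k); last by apply: ltnW.
  rewrite exprS /=. rewrite RplusE RmultE. ring.
- by move: Hk; rewrite /= ltnS leqNgt Hkl.
- rewrite Hkl subnn /=.
  have h1 := IH (size l) (leqnn _); rewrite subnn in h1.
  rewrite h1 (esym_big l (size l).+1) // exprS RplusE RmultE; ring.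
Qed.


Definition tt_ (m k : nat) (x : R) : R :=
  (-1) ^+ k * ('C(m - k, k))%:R * (2 * x) ^+ (m - 2 * k).
Definition UU (m : nat) (x : R) : R := \sum_(k < m.+1) tt_ m k x.

Lemma tt_rec m k x : tt_ m.+2 k.+1 x = 2 * x * tt_ m.+1 k.+1 x - tt_ m k x.
Proof.
rewrite /tt_.
have [km|mk] := leqP k m.
- have e1: (m.+2 - k.+1 = (m-k).+1)%N by lia.
  rewrite e1 binS natrD.
  have e2: (m.+2 - 2*k.+1 = m - 2*k)%N by lia.
  have e3: (m.+1 - k.+1 = m-k)%N by lia.
  rewrite e2 e3.
  have [h|h] := leqP k.+1 (m-k).
  + have e4: (m - 2*k = (m.+1 - 2*k.+1).+1)%N by lia.
    rewrite e4 !exprS.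
    move: ((-1) ^+ k) ((2 * x) ^+ (m.+1 - 2 * k.+1)) => a b. ring.
  + rewrite (bin_small h) exprS.
    move: ((-1) ^+ k) ((2 * x) ^+ (m - 2 * k)) => a b. ring.
- have e1: (m.+2 - k.+1 = 0)%N by lia.
  have e3: (m.+1 - k.+1 = 0)%N by lia.
  have e2: (m - k = 0)%N by lia.
  rewrite e1 e2 e3 !bin_small //; [ring|lia].
Qed.

Lemma tt_zero m k x : (m < k)%N -> tt_ m k x = 0.
Proof.
move=> h; rewrite /tt_ bin_small ?mulr0 ?mul0r //; lia.
Qed.

Lemma UU_rec m x : UU m.+2 x = 2 * x * UU m.+1 x - UU m x.
Proof.
rewrite /UU big_ord_recl.
under eq_bigr => i _ do rewrite /= tt_rec.
rewrite big_split /= sumrN -mulr_sumr.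
rewrite [\sum_(i < m.+2) tt_ m i x]big_ord_recr /= (tt_zero _ _ x (ltnSn m)) addr0.
rewrite [\sum_(i < m.+2) tt_ m.+1 i.+1 x]big_ord_recr /=.
rewrite (tt_zero _ _ x (ltnSn m.+1)) addr0.
rewrite [in RHS]big_ord_recl.
have -> : tt_ m.+2 0 x = 2 * x * tt_ m.+1 0 x.
  rewrite /tt_ !subn0 !bin0 ?muln0 ?subn0 exprS.
  move: ((2 * x) ^+ m.+1) => b. ring.
rewrite mulrDr; ring.
Qed.


Lemma sin_UU m phi : sin (m.+1%:R * phi) = sin phi * UU m (cos phi).
Proof.
suff: sin (m.+1%:R * phi) = sin phi * UU m (cos phi) /\
      sin (m.+2%:R * phi) = sin phi * UU m.+1 (cos phi) by case.
elim: m => [|m [IH1 IH2]].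
  split.
    rewrite /UU big_ord_recl big_ord0 /tt_ /= mul1r addr0 expr0 !mulr1; done.
  rewrite /UU big_ord_recl big_ord_recl big_ord0 /tt_ /= addr0.
  have -> : 'C(1 - 0, 0) = 1%N by [].
  have -> : 'C(1 - bump 0 0, bump 0 0) = 0%N by [].
  have -> : (1 - 2 * 0 = 1)%N by [].
  rewrite mulr0n mulr0 mul0r addr0 expr0 mul1r expr1.
  have -> : 2%:R * phi = phi + phi by ring.
  rewrite sinD. ring.
split => //.
rewrite UU_rec.
have e1 : m.+3%:R * phi = m.+2%:R * phi + phi.
  rewrite -[m.+3]addn1 natrD; ring.
have e2 : m.+1%:R * phi = m.+2%:R * phi + - phi.
  rewrite -[m.+2]addn1 natrD; ring.
rewrite e1 sinD.
have : sin (m.+2%:R * phi + - phi) = sin phi * UU m (cos phi) by rewrite -e2.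
rewrite sinD sin_neg cos_neg => h.
have h2 : sin (m.+2%:R * phi) * cos phi + cos (m.+2%:R * phi) * sin phi =
   2 * cos phi * sin (m.+2%:R * phi) - (sin (m.+2%:R * phi) * cos phi + cos (m.+2%:R * phi) * - sin phi).
  ring.
rewrite h2 h IH2. ring.
Qed.

Definition cc (n k : nat) : R := (-1) ^+ k * ('C(2 * n - k, k))%:R / 4 ^+ k.
Definition qq n : {poly R} := \poly_(i < n.+1) cc n (n - i).

Lemma qq_horner n x : 4 ^+ n * (qq n).[x ^+ 2] = UU (2 * n) x.
Proof.
pose G i := 4 ^+ n * cc n i * (x ^+ 2) ^+ (n - i).
have L : 4 ^+ n * (qq n).[x ^+ 2] = \sum_(i < n.+1) G i.
  rewrite horner_poly mulr_sumr (reindex_inj rev_ord_inj) /=.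
  apply: eq_bigr => i _; rewrite /G subSS subKn; last by rewrite -ltnS.
  by rewrite mulrA.
rewrite L (big_ord_widen (2 * n).+1 G); last by lia.
rewrite big_mkcond /UU; apply: eq_bigr => i _.
case: ifP => hi.
  have e1 : (2 * n - 2 * i = 2 * (n - i))%N by lia.
  have e2 : n = (i + (n - i))%N by lia.
  have e3 : (2 * x) ^+ (2 * (n - i)) = 4 ^+ (n - i) * (x ^+ 2) ^+ (n - i).
    rewrite exprM !exprMn.
    have -> : (4:R) = 2 * 2 by rewrite -natrM.
    rewrite exprMn. move: ((2:R) ^+ (n - i)) (x ^+ (n - i)) => p q. ring.
  rewrite /tt_ /G /cc e1 e3.
  rewrite {1}e2 exprD.
  have h4 : (4 : R) ^+ i != 0 by rewrite expf_neq0 // pnatr_eq0.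
  move: h4; move: ((4 : R) ^+ i) ((4 : R) ^+ (n - i)) ((-1 : R) ^+ i) ((x ^+ 2) ^+ (n - i)) => a b s y h4.
  field. exact: h4.
rewrite /tt_ bin_small ?mulr0 ?mul0r //. lia.
Qed.

Lemma sin2_listE n : sin2_list n = [seq sin (th n j) ^+ 2 | j <- iota 1 n].
Proof. rewrite /sin2_list listE; apply: eq_map => j; by rewrite RpowE. Qed.

Lemma qq_root n j : (1 <= j)%N -> (j <= n)%N -> root (qq n) (sin (th n j) ^+ 2).
Proof.
move=> h1 h2.
have [phi [r1 [r2 r3]]] := th_root' _ _ h1 h2.
have := sin_UU (2 * n) phi.
rewrite -INRE r1 r3 => /esym/eqP; rewrite mulf_eq0 => /orP [/eqP hs | /eqP hu].
  by move: r2; rewrite hs => /Rlt_irrefl.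
rewrite -qq_horner in hu.
move/eqP: hu; rewrite mulf_eq0 => /orP [|]; last by [].
by rewrite expf_eq0 pnatr_eq0 andbF.
Qed.

Lemma uniq_l n : uniq [seq sin (th n j) ^+ 2 | j <- iota 1 n].
Proof.
rewrite map_inj_in_uniq ?iota_uniq // => j1 j2.
rewrite !mem_iota => /andP[a1 b1] /andP[a2 b2] e.
case: (ltngtP j1 j2) => // h; exfalso.
- have hb : (j2 <= n)%N by lia.
  have := th_sin_mono n j1 j2 a1 h hb; rewrite !RpowE e; exact: Rlt_irrefl.
- have hb : (j1 <= n)%N by lia.
  have := th_sin_mono n j2 j1 a2 h hb; rewrite !RpowE e; exact: Rlt_irrefl.
Qed.

Lemma cc0 n : cc n 0 = 1.
Proof. by rewrite /cc !expr0 subn0 bin0 mul1r divr1. Qed.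

Lemma main_mc n k : (1 <= n)%N -> (k <= n)%N ->
  Defs.esym k (sin2_list n) = 'C(2 * n - k, k)%:R / 4 ^+ k.
Proof.
move=> hn hk.
rewrite sin2_listE; set l := [seq _ | j <- iota 1 n].
have sl : size l = n by rewrite size_map size_iota.
have sq : size (qq n) = n.+1.
  by rewrite /qq size_poly_eq //= subnn cc0 oner_neq0.
have hq : qq n = \prod_(z <- l) ('X - z%:P).
  have := @all_roots_prod_XsubC _ (qq n) l.
  rewrite sq sl uniq_rootsE uniq_l => /(_ erefl) -> //.
    rewrite lead_coefE sq /= coef_poly ltnSn subnn cc0 scale1r.
    by [].
  apply/allP => z /mapP [j hj ->]; rewrite mem_iota in hj.
  apply: qq_root; lia.
have := esym_coef l k; rewrite sl -hq coef_poly.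
have -> : (n - k < n.+1)%N by lia.
rewrite subKn // /cc => /(_ hk) e.
have s1 : (-1) ^+ k != 0 :> R by rewrite signr_eq0.
apply: (mulfI s1).
by rewrite -e !mulrA.
Qed.

Lemma rhs_eq n k : (k <= n)%N -> 'C(2 * n - k, k)%:R / 4 ^+ k =
  (4 ^+ k)^-1 * ((2 * n - k)`!)%:R / (((2 * n - 2 * k)`!)%:R * (k`!)%:R) :> R.
Proof.
move=> hk.
have e : (2 * n - 2 * k = (2 * n - k) - k)%N by lia.
rewrite e -(bin_fact (_ : (k <= 2 * n - k)%N)); last by lia.
rewrite !natrM.
have f1 : ((k`!)%:R : R) != 0 by rewrite pnatr_eq0 -lt0n fact_gt0.
have f2 : (((2 * n - k - k)`!)%:R : R) != 0 by rewrite pnatr_eq0 -lt0n fact_gt0.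
have f3 : ((4 : R) ^+ k) != 0 by rewrite expf_neq0 // pnatr_eq0.
move: f1 f2 f3; move: ((k`!)%:R : R) (((2 * n - k - k)`!)%:R : R) ((4 : R) ^+ k) ('C(2 * n - k, k)%:R : R) => a b c d f1 f2 f3.
field. by rewrite f1 f2 f3.
Qed.

Lemma four : IZR (Zpos 4) = 4 :> R.
Proof. by rewrite IZRposE INRE. Qed.
End Helpers.

Lemma final (n k : nat) : le 1 n -> le k n ->
  Defs.esym k (sin2_list n) =
  Rdiv (Rmult (Rinv (pow 4 k)) (INR (fact (Nat.sub (Nat.mul 2 n) k))))
    (Rmult (INR (fact (Nat.sub (Nat.mul 2 n) (Nat.mul 2 k)))) (INR (fact k))).
Proof.
move=> hn hk.
rewrite main_mc; [| by apply/ssrnat.leP | by apply/ssrnat.leP].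
rewrite rhs_eq; last by apply/ssrnat.leP.
rewrite !INRE !factE' RpowE four.
reflexivity.
Qed.
End Aux.

Theorem mainTheorem10 (n k : nat) (hn : (1 <= n)%nat) (hk : (k <= n)%nat) :
  esym k (sin2_list n) =
  / 4 ^ k * INR (fact (2 * n - k)) / (INR (fact (2 * n - 2 * k)) * INR (fact k)).
Proof.
exact (Aux.final n k hn hk).
Qed.
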